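(* Let $D$ be a $G$-invariant domain in $\Xi^+$. Then $W^0\cdot(\mathcal D^{\llcorner})^+=\mathcal D^{\llcorner}_\circ$.
   Context: $G$ is a connected, non-compact, real simple Lie group contained in its universal complexification $G^{\mathbb C}$; $K$ maximal compact, $G/K$ an irreducible Hermitian symmetric space of non-compact type, $\theta$ the Cartan involution, $\mathfrak g=\mathfrak k\oplus\mathfrak p$, $\mathfrak a\subset\mathfrak p$ maximal abelian, $r=\dim\mathfrak a$, $\mathfrak g^\alpha$ restricted root spaces, $e_1,\dots,e_r$ a basis of $\mathfrak a^*$ with restricted roots of type $C_r$ ($\pm2e_j,\pm e_j\pm e_k$) or $BC_r$ (additionally $\pm e_j$). $Z_0$ is the central element of $\mathfrak k$ defining the complex structure; $E_j\in\mathfrak g^{2e_j}$ with $A_j=[\theta E_j,E_j]$, $[A_j,E_j]=2E_j$, $[Z_0,E_j-\theta E_j]=A_j$, $[Z_0,A_j]=-(E_j-\theta E_j)$. $\Lambda_r=\mathrm{span}_{\mathbb R}\{E_j\}$, $\Lambda_r^{\llcorner}=\{\sum x_jE_j:x_j\ge0\}$. $W_K(\Lambda_r)=N_K(\Lambda_r)/Z_K(\Lambda_r)$ acts on $\Lambda_r$ by permutations of the $E_j$ and is generated by the reflections $\gamma_{k\,k+1}$ ($1\le k\le r-1$) swapping the $k$-th and $(k+1)$-th coordinates. $x_0=eK^{\mathbb C}\in G^{\mathbb C}/K^{\mathbb C}$, $\Xi^+=G\exp(i\{\sum x_jE_j:x_j>-1\})\cdot x_0$. For $D$: $\mathcal D^{\llcorner}=\{X\in\Lambda_r^{\llcorner}:\exp(iX)\cdot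 x_0\in D\}$ (a $W_K(\Lambda_r)$-invariant open subset of $\Lambda_r^{\llcorner}$); $(\mathcal D^{\llcorner})^+=\mathcal D^{\llcorner}\cap\{\sum x_jE_j:x_1\ge x_2\ge\dots\ge x_r\ge0\}$ (which is connected); $\mathcal D^{\llcorner}_\circ$ is the connected component of $\mathcal D^{\llcorner}$ containing $(\mathcal D^{\llcorner})^+$. $\Gamma^0$ is the set of those $\gamma_{k\,k+1}$ whose fixed-point hyperplane contains a non-zero element of $(\mathcal D^{\llcorner})^+$, and $W^0$ is the subgroup of $W_K(\Lambda_r)$ generated by $\Gamma^0$. *)

(* Defs.v *)
From HB Require Import structures.
From mathcomp Require Import all_boot all_order all_algebra all_fingroup.
From mathcomp Require Import all_classical all_reals all_analysis.
Set Implicit Arguments. Unset Strict Implicit. Unset Printing Implicit Defensive.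
Import Order.TTheory GRing.Theory Num.Theory.
Import numFieldTopology.Exports.
Local Open Scope classical_set_scope.
Local Open Scope ring_scope.

(* Combinatorial model of Lambda_r = span_R {E_1,...,E_r}: a point
   sum_j x_j E_j is the row vector x with x 0 j = x_{j+1}.
   W_K(Lambda_r) acts by permutations of coordinates (the full symmetric
   group 'S_r, generated by the adjacent transpositions gamma_{k k+1}). *)

Definition cone (R : realType) (r : nat) : set 'rV[R]_r :=
  [set x | forall i : 'I_r, 0 <= x ord0 i].

Definition chamber (R : realType) (r : nat) : set 'rV[R]_r :=
  [set x | (forall i : 'I_r, 0 <= x ord0 i) /\
           (forall i j : 'I_r, (i <= j)%N -> x ord0 j <= x ord0 i)].

Definition wact (R : realType) (r : nat) (s : 'S_r) (x : 'rV[R]_r) : 'rV[R]_r :=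
  col_perm s x.

(* the index k+1 (used only when k+1 < r; defaults to k otherwise) *)
Definition nextord (r : nat) (k : 'I_r) : 'I_r := insubd k k.+1.

(* gamma_{k k+1}, for k : 'I_r with k+1 < r (0-based indices) *)
Definition gamma (r : nat) (k : 'I_r) : 'S_r := tperm k (nextord k).

Definition plus_part (R : realType) (r : nat) (U : set 'rV[R]_r) : set 'rV[R]_r :=
  U `&` @chamber R r.

Definition Gamma0 (R : realType) (r : nat) (U : set 'rV[R]_r) : {set 'I_r} :=
  [set k : 'I_r | (k.+1 < r)%N &&
     `[< exists x, plus_part U x /\ x != 0 /\ x ord0 k = x ord0 (nextord k) >]].

Definition W0 (R : realType) (r : nat) (U : set 'rV[R]_r) : {set 'S_r} :=
  <<(@gamma r @: Gamma0 U)>>%g.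

(* Main.v *)
Require Import Defs.
From HB Require Import structures.
From mathcomp Require Import all_boot all_order all_algebra all_fingroup.
From mathcomp Require Import all_classical all_reals all_analysis.
From mathcomp Require Import ring lra zify.
Import Order.TTheory GRing.Theory Num.Theory.
Import numFieldTopology.Exports.
Local Open Scope classical_set_scope.
Local Open Scope ring_scope.
Set Implicit Arguments. Unset Strict Implicit.

Lemma nextordE r (k : 'I_r) : (k.+1 < r)%N -> nextord k = k.+1 :> nat.
Proof. by move=> h; rewrite /nextord val_insubd h. Qed.

Lemma nextord_neq r (k : 'I_r) : (k.+1 < r)%N -> k != nextord k.
Proof. by move=> h; apply/eqP => /(congr1 val); rewrite /= nextordE // => /n_Sn. Qed.

Lemma swap_sum (R : realType) r (f : 'I_r -> R) (s : 'S_r) (k : 'I_r) :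
  (k.+1 < r)%N ->
  \sum_(i < r) (i%:R) * f ((gamma k * s)%g i) =
  \sum_(i < r) (i%:R) * f (s i) + (f (s k) - f (s (nextord k))).
Proof.
move=> hk; have kk := nextord_neq hk.
rewrite (bigD1 k) // (bigD1 (nextord k)) 1?eq_sym //=.
rewrite [X in _ = X + _](bigD1 k) // (bigD1 (nextord k)) 1?eq_sym //=.
rewrite !permM /gamma tpermL tpermR.
rewrite (eq_bigr (fun i : 'I_r => (i : nat)%:R * f (s i))); last first.
  by move=> i /andP[ik ik']; rewrite permM tpermD // eq_sym.
rewrite nextordE // -addn1 natrD; lra.
Qed.

Lemma exists_min (R : realType) (I : finType) (P : pred I) (F : I -> R) i0 :
  P i0 -> exists2 i, P i & forall j, P j -> F i <= F j.
Proof. by move=> Pi0; case: (arg_minP F Pi0) => i Pi H; exists i. Qed.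

Lemma ord_succ r (j : 'I_r) n : (j : nat) = n.+1 ->
  exists j0 : 'I_r, (j0 : nat) = n /\ nextord j0 = j /\ (j0.+1 < r)%N.
Proof.
move=> hj; have hn : (n < r)%N by apply: ltn_trans (ltn_ord j); rewrite hj.
exists (Ordinal hn); split => //; split; last by rewrite /= -hj.
by apply: val_inj => /=; rewrite nextordE //= -hj.
Qed.

Lemma sort_exists (R : realType) r (x : 'rV[R]_r) :
  exists s : 'S_r, forall i j : 'I_r, (i <= j)%N -> x ord0 (s j) <= x ord0 (s i).
Proof.
have [s _ Hs] := @exists_min R _ predT
  (fun s : 'S_r => \sum_(i < r) (i%:R) * x ord0 (s i)) 1%g isT.
have adj : forall k : 'I_r, (k.+1 < r)%N -> x ord0 (s (nextord k)) <= x ord0 (s k).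
  move=> k hk; rewrite leNgt; apply/negP => lt.
  have := Hs (gamma k * s)%g isT; rewrite swap_sum //; lra.
exists s.
suff H : forall d (i j : 'I_r), (j : nat) = (i + d)%N -> x ord0 (s j) <= x ord0 (s i).
  by move=> i j ij; apply: (H (j - i)%N); rewrite subnKC.
elim=> [|d IH] i j hj.
  by rewrite addn0 in hj; rewrite (val_inj hj).
rewrite addnS in hj; have [j0 [h0 [<- hr]]] := ord_succ hj.
exact: le_trans (adj _ hr) (IH _ _ h0).
Qed.

Lemma no_descent r (u : 'S_r) :
  (forall k : 'I_r, (k.+1 < r)%N -> (u k < u (nextord k))%N) -> u = 1%g.
Proof.
move=> H.
have s1 : forall n (i : 'I_r), (i : nat) = n -> (n <= u i)%N.
  elim=> [//|n IH] i hi.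
  have [j0 [h0 [<- hr]]] := ord_succ hi.
  by apply: leq_trans (H _ hr); rewrite ltnS IH.
have s2 : forall m (i : 'I_r), (i + m)%N = r.-1 -> (u i <= i)%N.
  elim=> [|m IH] i hi.
    have := ltn_ord (u i); have := ltn_ord i; lia.
  have hr : (i.+1 < r)%N by have := ltn_ord i; lia.
  have := IH (nextord i); rewrite nextordE // => hle.
  have hlt := H _ hr.
  have := hle ltac:(lia); lia.
apply/permP => i; rewrite perm1; apply: val_inj => /=.
have := s1 _ i erefl; have := s2 (r.-1 - i)%N i; have := ltn_ord i; lia.
Qed.

Lemma eps_point (R : realType) r (hr : (0 < r)%N) (U : set 'rV[R]_r)
  (hU_open : exists V : set 'rV[R]_r, open V /\ U = V `&` @cone R r) :
  U 0 -> exists z : 'rV[R]_r, plus_part U z /\ z != 0 /\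
    forall i j, z ord0 i = z ord0 j.
Proof.
case: hU_open => V [oV ->] [V0 _].
have : nbhs (0 : 'rV[R]_r) V by rewrite openE in oV; exact: oV.
case/nbhs_ballP => e /= e0 sub.
exists (const_mx (e / 2)); split; last split.
- split; first split.
  + apply: sub; split => // i j; rewrite !mxE /ball /= sub0r normrN.
    rewrite ger0_norm; lra.
  + by move=> i; rewrite mxE; lra.
  + split; first by move=> i; rewrite mxE; lra.
    by move=> i j _; rewrite !mxE.
- apply/eqP => /matrixP /(_ ord0 (Ordinal hr)); rewrite !mxE; lra.
- by move=> i j; rewrite !mxE.
Qed.

Lemma gamma_W0 (R : realType) r (hr : (0 < r)%N) (U : set 'rV[R]_r)
  (hU_open : exists V : set 'rV[R]_r, open V /\ U = V `&` @cone R r)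
  (k : 'I_r) (b : 'rV[R]_r) :
  (k.+1 < r)%N -> plus_part U b -> b ord0 k = b ord0 (nextord k) ->
  gamma k \in W0 U.
Proof.
move=> hk Pb hb; apply: mem_gen; apply: imset_f; rewrite inE hk /=.
apply/asboolP.
have [b0|bn0] := eqVneq b 0.
  have U0 : U 0 by case: Pb; rewrite b0.
  have [z [Pz [z0 zc]]] := eps_point hr hU_open U0.
  by exists z.
by exists b.
Qed.

Lemma wactE (R : realType) r (s : 'S_r) (x : 'rV[R]_r) i : wact s x ord0 i = x ord0 (s i).
Proof. by rewrite /wact mxE. Qed.

Lemma key (R : realType) r (hr : (0 < r)%N) (U : set 'rV[R]_r)
  (hU_open : exists V : set 'rV[R]_r, open V /\ U = V `&` @cone R r)
  (a b : 'rV[R]_r) (t : 'S_r) :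
  chamber a -> plus_part U b -> b = wact t a -> t \in W0 U.
Proof.
move=> [_ ca] Pb bt.
have Pt : ((t * t^-1)%g \in W0 U) && (wact t a == b) by rewrite mulgV group1 bt eqxx.
have [u /andP[uW /eqP ub] Hu] := @exists_min R _
  (fun u : 'S_r => ((u * t^-1)%g \in W0 U) && (wact u a == b))
  (fun u : 'S_r => \sum_(i < r) (i%:R) * (- (u i)%:R : R)) t Pt.
suff u1 : u = 1%g by move: uW; rewrite u1 mul1g => /groupVr; rewrite invgK.
apply: no_descent => k hk; rewrite ltnNge; apply/negP => le.
have kk := nextord_neq hk.
have lt : (u (nextord k) < u k)%N.
  rewrite ltn_neqAle le andbT; apply/negP => /eqP/val_inj/perm_inj.
  by apply/eqP; rewrite eq_sym.
have [_ cb] := Pb.2.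
have ebk : b ord0 k = b ord0 (nextord k).
  apply/eqP; rewrite eq_le; apply/andP; split; last by apply: cb; rewrite nextordE // leqnSn.
  rewrite -ub !wactE.
  by apply: ca; exact: ltnW.
have gW := gamma_W0 hr hU_open hk Pb ebk.
pose f := fun v : 'I_r => (- (v : nat)%:R : R).
have : (((gamma k * u) * t^-1)%g \in W0 U) && (wact (gamma k * u) a == b) ->
   \sum_(i < r) i%:R * f (u i) <= \sum_(i < r) i%:R * f ((gamma k * u)%g i)
  := Hu (gamma k * u)%g.
rewrite swap_sum // /f.
have -> : (gamma k * u * t^-1)%g \in W0 U by rewrite -mulgA groupM.
have -> : wact (gamma k * u) a == b.
  apply/eqP; rewrite /wact col_permM -/(wact u a) ub.
  apply/matrixP => i j; rewrite !mxE (ord1 i) /gamma.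
  case: (tpermP k (nextord k) j) => [->|->|] //.
move=> /(_ isT).
have : ((u (nextord k) : nat)%:R : R) < (u k : nat)%:R by rewrite ltr_nat.
lra.
Qed.

Lemma lip_cont (R : realType) r (T : pseudoMetricType R) (f : 'rV[R]_r -> T) :
  (forall x y (e : R), 0 < e -> ball x e y -> ball (f x) e (f y)) -> continuous f.
Proof.
move=> H x; apply/(@cvg_ballP R T _ (nbhs x) (nbhs_filter x)) => e e0.
near=> y; apply: H => //; near: y; exact: nbhsx_ballx.
Unshelve. all: by end_near.
Qed.

Lemma ball_mx (R : realType) r (x y : 'rV[R]_r) e : ball x e y -> forall i j, ball (x i j) e (y i j).
Proof. by case. Qed.

Lemma ball_mx' (R : realType) r (x y : 'rV[R]_r) e : 0 < e -> (forall i j, ball (x i j) e (y i j)) -> ball x e y.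
Proof. by move=> e0 H; split. Qed.

Lemma coord_cont (R : realType) r (i : 'I_r) : continuous (fun x : 'rV[R]_r => x ord0 i).
Proof. apply: lip_cont => x y e _ /ball_mx; apply. Qed.

Lemma wact_cont (R : realType) r (s : 'S_r) : continuous (@wact R r s).
Proof. apply: lip_cont => x y e e0 /ball_mx H; apply: ball_mx' => // i j.
rewrite /wact !mxE; exact: H. Qed.


Lemma chamber_closed (R : realType) r : closed (@chamber R r).
Proof.
have -> : @chamber R r =
  (\bigcap_(i in [set: 'I_r]) (fun x : 'rV[R]_r => x ord0 i) @^-1` [set y | 0 <= y]) `&`
  (\bigcap_(ij in [set ij : 'I_r * 'I_r | (ij.1 <= ij.2)%N])
     (fun x : 'rV[R]_r => x ord0 ij.1 - x ord0 ij.2) @^-1` [set y | 0 <= y]).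
  apply/seteqP; split => x.
    case=> h1 h2; split => [i _|[i j] /= ij] /=; first exact: h1.
    by rewrite subr_ge0; exact: h2.
  case=> h1 h2; split => [i|i j ij]; first exact: h1.
  by have := h2 (i, j) ij; rewrite /= subr_ge0.
apply: closedI; apply: closed_bigI.
  move=> i _; apply: preimage_closed; [move=> x _; exact: coord_cont | exact: closed_ge].
move=> [i j] _; apply: preimage_closed; last exact: closed_ge.
move=> x _; have h := @continuousB R R _ (fun x : 'rV[R]_r => x ord0 i) (fun x => x ord0 j) x (@coord_cont R r i x) (@coord_cont R r j x).
exact: h.
Qed.

Lemma wactM (R : realType) r (s t : 'S_r) (x : 'rV[R]_r) :
  wact (s * t)%g x = wact s (wact t x).
Proof. exact: col_permM. Qed.

Lemma wact1 (R : realType) r (x : 'rV[R]_r) : wact 1%g x = x.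
Proof. exact: col_perm1. Qed.

Lemma wactK (R : realType) r (s : 'S_r) (x : 'rV[R]_r) : wact s (wact s^-1 x) = x.
Proof. by rewrite -wactM mulgV wact1. Qed.

Lemma wactKV (R : realType) r (s : 'S_r) (x : 'rV[R]_r) : wact s^-1 (wact s x) = x.
Proof. by rewrite -wactM mulVg wact1. Qed.

Lemma wact_gamma_fix (R : realType) r (k : 'I_r) (b : 'rV[R]_r) :
  b ord0 k = b ord0 (nextord k) -> wact (gamma k) b = b.
Proof.
move=> ebk; apply/matrixP => i j; rewrite !mxE (ord1 i) /gamma.
by case: (tpermP k (nextord k) j) => [->|->|].
Qed.

Lemma image_conn (R : realType) r (s : 'S_r) (A : set 'rV[R]_r) :
  connected A -> connected (wact s @` A).
Proof.
move=> cA; apply: connected_continuous_connected => //.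
apply: continuous_subspaceT; exact: wact_cont.
Qed.

Lemma comp_absorb (R : realType) r (U C : set 'rV[R]_r) x0 c :
  connected C -> C `<=` U -> C c -> connected_component U x0 c ->
  C `<=` connected_component U x0.
Proof.
move=> cC CU Cc x0c y Cy; apply: connected_component_trans x0c _.
exact: (connected_component_max Cc CU cC).
Qed.

Theorem lemma4p9 (R : realType) (r : nat) (hr : (0 < r)%N)
  (U : set 'rV[R]_r)
  (hU_open : exists V : set 'rV[R]_r, open V /\ U = V `&` @cone R r)
  (hU_inv : forall (s : 'S_r) (x : 'rV[R]_r), U x -> U (wact s x))
  (hplus_conn : connected (plus_part U)) :
  forall x0, plus_part U x0 ->
    [set y | exists2 w : 'S_r, w \in W0 U &
                exists2 x, plus_part U x & y = wact w x]
    = connected_component U x0.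
Proof.
move=> x0 Px0.
have PU : plus_part U `<=` U by move=> x [].
have Pcomp : plus_part U `<=` connected_component U x0.
  exact: connected_component_max Px0 PU hplus_conn.
apply/seteqP; split.
  move=> _ [w /gen_prodgP [n [c cA ->]] [x Px ->]].
  elim: n c cA x Px => [|n IH] c cA x Px.
    by rewrite big_ord0 wact1; exact: Pcomp.
  rewrite big_ord_recr /= wactM.
  have /imsetP [k] := cA ord_max.
  rewrite inE => /andP [hk /asboolP [z [Pz [_ zk]]]] ck.
  set w' := (\prod_(i < n) c (widen_ord (leqnSn n) i))%g.
  have IH' : forall x, plus_part U x -> connected_component U x0 (wact w' x).
    by move=> x1 Px1; apply: IH => // i; apply: cA.
  apply: (@comp_absorb R r U (wact w' @` (wact (c ord_max) @` plus_part U)) x0 (wact w' z)).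
  - by apply: image_conn; apply: image_conn.
  - move=> p [q [y Py eq1] eq2]; rewrite -eq2 -eq1; apply: (hU_inv); apply: (hU_inv); exact: PU y Py.
  - exists (wact (c ord_max) z); first by exists z.
    by rewrite ck wact_gamma_fix.
  - exact: IH'.
  - by exists (wact (c ord_max) x) => //; exists x.
move=> y Cy.
set C := connected_component U x0.
set A' := \bigcup_(w in [set w : 'S_r | w \in W0 U]) (wact w^-1 @^-1` @chamber R r).
set B' := \bigcup_(w in [set w : 'S_r | w \notin W0 U]) (wact w^-1 @^-1` @chamber R r).
have cl : forall (S : set 'S_r), closed (\bigcup_(w in S) (wact w^-1 @^-1` @chamber R r)).
  move=> S; apply: closed_bigcup; first exact: finite_finset.
  move=> w _; apply: preimage_closed; last exact: chamber_closed.
  move=> x _; exact: wact_cont.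
have CU : C `<=` U by exact: connected_component_sub.
have disj : forall z, U z -> A' z -> B' z -> False.
  move=> z Uz [v vW cv] [w wW cw].
  have Pb : plus_part U (wact w^-1 z) by split => //; apply: (hU_inv).
  have := @key R r hr U hU_open (wact v^-1 z) (wact w^-1 z) (w^-1 * v)%g cv Pb.
  rewrite wactM wactK => /(_ erefl) h.
  move: wW => /= /negP; apply.
  have vW' : v \in W0 U by exact: vW.
  rewrite -groupV (_ : (w^-1 = (w^-1 * v) * v^-1)%g); last by rewrite -mulgA mulgV mulg1.
  by rewrite groupM // groupVr.
have cover : forall z, U z -> A' z \/ B' z.
  move=> z Uz.
  have [s hs] := sort_exists z.
  have ch : chamber (wact (s^-1)^-1 z).
    rewrite invgK; split => [i|i j ij]; rewrite !wactE //.
    move: Uz; case: hU_open => V [_ ->] [_ cz]; exact: cz.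
    exact: hs.
  have [sW|sW] := boolP ((s^-1)%g \in W0 U).
    by left; exists (s^-1)%g.
  by right; exists (s^-1)%g.
have Cx0 : C x0 by apply: connected_component_refl; apply: PU.
have AC : C `&` A' = C.
  apply: (component_connected (A := U) (x := x0)).
  - exists x0; split => //; exists 1%g; first exact: group1.
    by rewrite /= invg1 wact1; case: Px0.
  - exists (~` B'); first by rewrite openC; exact: cl.
    apply/seteqP; split => z [Cz h]; split => //.
      by move=> Bz; exact: disj (CU _ Cz) h Bz.
    by case: (cover _ (CU _ Cz)).
  - by exists A'; [exact: cl|].
have : (C `&` A') y by rewrite AC.
case=> _ [w wW cw].
exists w; first exact: wW.
exists (wact w^-1 y); last by rewrite wactK.
split => //; apply: (hU_inv); exact: CU.
Qed.
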